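(* Let $\mathbf{A}\in\mathbb{R}^{m\times n}$, let $l$ be a positive integer with $l<m$, let $\alpha$ be a real number with $0<\alpha\le\sigma_l(\mathbf{A}\mathbf{A}^{\mathrm{T}})/2$, and let $i\le l$. Then $\sigma_i(\mathbf{A}\mathbf{A}^{\mathrm{T}}-\alpha\mathbf{I})=\sigma_i(\mathbf{A}\mathbf{A}^{\mathrm{T}})-\alpha$. Moreover, if $\sigma_i(\mathbf{A}\mathbf{A}^{\mathrm{T}}-\alpha\mathbf{I})\neq\sigma_{l+1}(\mathbf{A}\mathbf{A}^{\mathrm{T}}-\alpha\mathbf{I})$, then the left singular vectors of $\mathbf{A}\mathbf{A}^{\mathrm{T}}-\alpha\mathbf{I}$ corresponding to its $i$-th largest singular value are exactly the left singular vectors of $\mathbf{A}\mathbf{A}^{\mathrm{T}}$ corresponding to its $i$-th largest singular value.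
   Context: $\sigma_i(\cdot)$ denotes the $i$-th largest singular value of a matrix; $\mathbf{I}$ is the $m\times m$ identity matrix. *)

(* Defs.v *)
From HB Require Import structures.
From mathcomp Require Import all_boot all_order all_algebra.
From mathcomp Require Import boolp classical_sets reals.
Set Implicit Arguments. Unset Strict Implicit. Unset Printing Implicit Defensive.
Import Order.TTheory GRing.Theory Num.Theory.
Local Open Scope ring_scope.

Definition is_svd (R : realType) (m : nat) (M : 'M[R]_m)
    (U : 'M[R]_m) (d : 'rV[R]_m) (V : 'M[R]_m) : Prop :=
  [/\ U^T *m U = 1%:M, V^T *m V = 1%:M,
      (forall k : 'I_m, 0 <= d 0 k),
      (forall k l : 'I_m, (k <= l)%N -> d 0 l <= d 0 k) &
      M = U *m diag_mx d *m V^T].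

(* The vector of singular values (in nonincreasing order): the diagonal of
   any SVD of M (it is uniquely determined); chosen classically. *)
Definition singvals (R : realType) (m : nat) (M : 'M[R]_m) : 'rV[R]_m :=
  xget 0 [set d | exists U V, is_svd M U d V].

(* sigma M i = i-th largest singular value of M, 1-indexed (1 <= i <= m);
   0 outside that range (never used). *)
Definition sigma (R : realType) (m : nat) (M : 'M[R]_m) (i : nat) : R :=
  match @insub nat (fun k => (k < m)%N) 'I_m i.-1 with
  | Some k => singvals M 0 k
  | None => 0
  end.

Definition left_singular_vector (R : realType) (m : nat) (M : 'M[R]_m)
    (s : R) (u : 'cV[R]_m) : Prop :=
  u^T *m u = 1%:M /\
  exists v : 'cV[R]_m, [/\ v^T *m v = 1%:M, M *m v = s *: u & M^T *m u = s *: v].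

(* Main.v *)
Require Import Defs.
From HB Require Import structures.
From mathcomp Require Import all_boot all_order all_algebra.
From mathcomp Require Import boolp classical_sets reals.
From mathcomp Require Import perm ring lra zify.
Import Order.TTheory GRing.Theory Num.Theory.
Local Open Scope ring_scope.
Set Implicit Arguments. Unset Strict Implicit. Unset Printing Implicit Defensive.

Lemma dot_ge0 (R : realType) m (x : 'cV[R]_m) : 0 <= (x^T *m x) 0 0.
Proof.
rewrite mxE; apply: sumr_ge0 => i _; rewrite !mxE -expr2; exact: sqr_ge0.
Qed.

Lemma dot_eq0 (R : realType) m (x : 'cV[R]_m) : (x^T *m x) 0 0 = 0 -> x = 0.
Proof.
rewrite mxE => H.
have nn : forall i : 'I_m, true -> 0 <= x^T 0 i * x i 0.
  by move=> i _; rewrite mxE -expr2 sqr_ge0.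
have H' := psumr_eq0P nn H.
apply/matrixP => i j; rewrite ord1 mxE.
have := H' i isT; rewrite mxE -expr2 => /eqP; rewrite sqrf_eq0 => /eqP //.
Qed.

Lemma psd_eig (R : realType) m (M : 'M[R]_m) (d : R) (u : 'cV[R]_m) :
  M^T = M -> (forall x : 'cV_m, 0 <= (x^T *m M *m x) 0 0) -> 0 <= d ->
  M *m (M *m u) = d ^+ 2 *: u -> M *m u = d *: u.
Proof.
move=> Ms Mpsd; rewrite le0r => /orP[/eqP -> | d_gt0] Hu.
  rewrite expr2 mulr0 scale0r in Hu; rewrite scale0r.
  apply: dot_eq0; rewrite trmx_mul Ms -mulmxA Hu mulmx0 mxE; done.
pose w := M *m u - d *: u.
have Mw : M *m w = - d *: w.
  rewrite /w mulmxBr Hu -scalemxAr scalerBr scalerA mulNr !scaleNr opprK addrC expr2.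
  done.
have Hq := Mpsd w; rewrite -mulmxA Mw -scalemxAr mxE in Hq.
have Hs := dot_ge0 (w : 'cV[R]_m).
have : (w^T *m w) 0 0 = 0 by nra.
move/dot_eq0; rewrite /w => /eqP; rewrite subr_eq0 => /eqP //.
Qed.


Lemma diag_delta (R : realType) m (d : 'rV[R]_m) k :
  diag_mx d *m delta_mx k 0 = d 0 k *: (delta_mx k 0 : 'cV_m).
Proof.
apply/matrixP => i j; rewrite mul_diag_mx !mxE.
by case: (eqVneq i k) => [->|ne] //=; rewrite !mulr0.
Qed.

Lemma svd_sym_diag (R : realType) m (M U V : 'M[R]_m) d :
  M^T = M -> (forall x : 'cV_m, 0 <= (x^T *m M *m x) 0 0) ->
  is_svd M U d V -> M = U *m diag_mx d *m U^T.
Proof.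
move=> Ms Mpsd [UU VV d0 dsort HM].
have MM : M *m M = U *m (diag_mx d *m diag_mx d) *m U^T.
  rewrite -{2}Ms {1}HM HM !trmx_mul trmxK tr_diag_mx.
  rewrite !mulmxA -(mulmxA _ V^T V) VV mulmx1 -!mulmxA.
  done.
have Hk : forall k : 'I_m, M *m (M *m (U *m (delta_mx k 0 : 'cV_m))) = (d 0 k) ^+ 2 *: (U *m (delta_mx k 0 : 'cV_m)).
  move=> k; rewrite !mulmxA MM -!mulmxA (mulmxA U^T) UU mul1mx.
  by rewrite diag_delta -!scalemxAr diag_delta -scalemxAr scalerA expr2.
have Hk' : forall k : 'I_m, M *m (U *m (delta_mx k 0 : 'cV_m)) = d 0 k *: (U *m (delta_mx k 0 : 'cV_m)).
  by move=> k; apply: psd_eig => //; apply: Hk.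
have MU : M *m U = U *m diag_mx d.
  apply/matrixP => i k; have := congr1 (fun X : 'cV_m => X i 0) (Hk' k).
  by rewrite mul_mx_diag mulmxA -!colE !mxE mulrC.
by rewrite -MU -mulmxA (mulmx1C UU) mulmx1.
Qed.


Definition sgv (R : realType) m (c : 'rV[R]_m) : 'rV[R]_m :=
  \row_k (if 0 <= c 0 k then 1 else -1).

Lemma svd_of_diag (R : realType) m (W : 'M[R]_m) (c e : 'rV[R]_m) (s : 'S_m) :
  W^T *m W = 1%:M -> (forall k, e 0 k = `|c 0 (s k)|) ->
  (forall k l : 'I_m, (k <= l)%N -> e 0 l <= e 0 k) ->
  is_svd (W *m diag_mx c *m W^T) (col_perm s W) e
         (col_perm s (W *m diag_mx (sgv c))).
Proof.
move=> WW He Hs.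
pose P : 'M[R]_m := perm_mx s^-1.
have PT : P^T = perm_mx s by rewrite tr_perm_mx invgK.
have PPT : P *m P^T = 1%:M by rewrite PT -perm_mxM mulVg perm_mx1.
have PTP : P^T *m P = 1%:M by rewrite PT -perm_mxM mulgV perm_mx1.
have SS : diag_mx (sgv c) *m diag_mx (sgv c) = 1%:M.
  rewrite mulmx_diag; apply/matrixP => i j; rewrite !mxE.
  by case: (i == j) => //=; case: ifP => _; rewrite ?mulr1 ?mulrNN ?mulr1.
have PeP : P *m diag_mx e *m P^T = diag_mx (\row_k `|c 0 k|).
  rewrite -row_permE PT.
  have -> : perm_mx s = perm_mx (s^-1)^-1 :> 'M[R]_m by rewrite invgK.
  rewrite -col_permE; apply/matrixP => i j; rewrite !mxE (inj_eq perm_inj) He permKV.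
  done.
have cS : diag_mx (\row_k `|c 0 k|) *m diag_mx (sgv c) = diag_mx c.
  rewrite mulmx_diag; congr diag_mx; apply/rowP => k; rewrite !mxE.
  case: ifP => h; first by rewrite mulr1 ger0_norm.
  by rewrite mulrN1 ltr0_norm ?opprK // ltNge h.
rewrite !col_permE -/P; split.
- by rewrite trmx_mul -mulmxA (mulmxA W^T) WW mul1mx PTP.
- rewrite !trmx_mul tr_diag_mx -!mulmxA (mulmxA W^T) WW mul1mx.
  by rewrite (mulmxA (diag_mx _)) SS mul1mx PTP.
- by move=> k; rewrite He normr_ge0.
- exact: Hs.
rewrite !trmx_mul tr_diag_mx !mulmxA -(mulmxA W P) -(mulmxA W (P *m _)) PeP.
by rewrite -(mulmxA W _ (diag_mx (sgv c))) cS.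
Qed.


Lemma char_poly_conj (R : realType) m (U X : 'M[R]_m) :
  U *m U^T = 1%:M -> char_poly (U *m X *m U^T) = char_poly X.
Proof.
move=> UU; rewrite /char_poly.
pose Up := map_mx (@polyC R) U.
have UpUp : Up *m Up^T = 1%:M by rewrite /Up map_trmx -map_mxM UU map_mx1.
have -> : char_poly_mx (U *m X *m U^T) = Up *m char_poly_mx X *m Up^T.
  rewrite /char_poly_mx mulmxBr mulmxBl mul_mx_scalar -scalemxAl UpUp.
  by rewrite scalemx1 /Up !map_mxM map_trmx.
have dU : \det Up * \det Up = 1 by rewrite -{2}det_tr -det_mulmx UpUp det1.
by rewrite !det_mulmx det_tr mulrAC dU mul1r.
Qed.

Lemma char_poly_diag (R : realType) m (f : 'rV[R]_m) :
  char_poly (diag_mx f) = \prod_(k < m) ('X - (f 0 k)%:P).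
Proof.
rewrite char_poly_trig; last first.
  by apply/is_trig_mxP => i j lt; rewrite !mxE; case: eqVneq lt => // ->; rewrite ltnn.
by apply: eq_bigr => k _; rewrite !mxE eqxx mulr1n.
Qed.

Lemma prod_XsubC_perm (R : realType) (s t : seq R) :
  \prod_(a <- s) ('X - a%:P) = \prod_(a <- t) ('X - a%:P) -> perm_eq s t.
Proof.
elim: s t => [|a s IH] t.
  rewrite big_nil => /(congr1 (fun p : {poly R} => size p)).
  by rewrite size_prod_XsubC size_poly1; case: t.
rewrite big_cons => H.
have at_ : a \in t.
  by rewrite -root_prod_XsubC -H rootM root_XsubC eqxx.
rewrite (perm_big _ (perm_to_rem at_)) big_cons /= in H.
have := mulfI (negbT (polyXsubC_eq0 a)) H => /IH.
move=> hp; rewrite perm_sym; apply: perm_trans (perm_to_rem at_) _.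
by rewrite perm_cons perm_sym.
Qed.

Lemma svd_char (R : realType) m (M U V : 'M[R]_m) e :
  is_svd M U e V ->
  char_poly (M *m M^T) = \prod_(k < m) ('X - (e 0 k ^+ 2)%:P).
Proof.
move=> [UU VV e0 es HM].
have -> : M *m M^T = U *m diag_mx (\row_k (e 0 k ^+ 2)) *m U^T.
  rewrite HM !trmx_mul trmxK tr_diag_mx !mulmxA -(mulmxA _ V^T V) VV mulmx1.
  by rewrite -(mulmxA U) mulmx_diag; congr (_ *m diag_mx _ *m _); apply/rowP => k; rewrite !mxE expr2.
rewrite char_poly_conj ?char_poly_diag; last exact: mulmx1C.
by apply: eq_bigr => k _; rewrite mxE.
Qed.

Definition seqrv (R : realType) m (r : 'rV[R]_m) := [seq r 0 k | k <- enum 'I_m].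

Lemma nth_seqrv (R : realType) m (r : 'rV[R]_m) (k : 'I_m) : nth 0 (seqrv r) k = r 0 k.
Proof. by rewrite /seqrv (nth_map k) ?size_enum_ord // nth_ord_enum. Qed.

Lemma size_seqrv (R : realType) m (r : 'rV[R]_m) : size (seqrv r) = m.
Proof. by rewrite size_map size_enum_ord. Qed.

Lemma sorted_seqrv (R : realType) m (r : 'rV[R]_m) :
  (forall k l : 'I_m, (k <= l)%N -> r 0 l <= r 0 k) ->
  sorted (fun x y : R => y <= x) (seqrv r).
Proof.
move=> H; apply/(sortedP 0) => i; rewrite size_seqrv => hi.
have hi' : (i < m)%N by apply: ltnW.
have -> : i = Ordinal hi' by [].
have -> : i.+1 = Ordinal hi by [].
by rewrite !nth_seqrv; apply: H => /=.
Qed.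

Lemma svd_unique (R : realType) m (M U1 V1 U2 V2 : 'M[R]_m) e1 e2 :
  is_svd M U1 e1 V1 -> is_svd M U2 e2 V2 -> e1 = e2.
Proof.
move=> H1 H2.
have C1 := svd_char H1; have C2 := svd_char H2.
case: H1 => _ _ p1 s1 _; case: H2 => _ _ p2 s2 _.
pose q1 : 'rV[R]_m := \row_k (e1 0 k ^+ 2).
pose q2 : 'rV[R]_m := \row_k (e2 0 k ^+ 2).
have Hp : perm_eq (seqrv q1) (seqrv q2).
  apply: prod_XsubC_perm; rewrite /seqrv !big_map -!enumT !big_enum /=.
  transitivity (\prod_(k < m) ('X - (e1 0 k ^+ 2)%:P)).
    by apply: eq_big => // k; rewrite mxE.
  rewrite -C1 C2; symmetry.
  by apply: eq_big => // k; rewrite mxE.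
have Heq : seqrv q1 = seqrv q2.
  apply: (sorted_eq (leT := fun x y : R => y <= x)) => //.
  - by move=> x y z h1 h2; apply: le_trans h1.
  - by move=> x y h; apply: le_anti; rewrite andbC.
  - by apply: sorted_seqrv => k l kl; rewrite !mxE lerXn2r ?nnegrE ?s1.
  - by apply: sorted_seqrv => k l kl; rewrite !mxE lerXn2r ?nnegrE ?s2.
apply/rowP => k.
have := congr1 (fun s => nth 0 s k) Heq; rewrite /= !nth_seqrv !mxE.
by move/eqP; rewrite eqrXn2 // => /eqP.
Qed.


Lemma sigmaE (R : realType) m (M : 'M[R]_m) (k : 'I_m) :
  sigma M k.+1 = singvals M 0 k.
Proof.
rewrite /sigma /=; case: insubP => [k' _ kk|]; last by rewrite /= ltn_ord.
by congr (singvals M 0 _); apply: val_inj.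
Qed.

Lemma lsv_psd (R : realType) m (M : 'M[R]_m) d u :
  M^T = M -> (forall x : 'cV_m, 0 <= (x^T *m M *m x) 0 0) -> 0 <= d ->
  left_singular_vector M d u <-> (u^T *m u = 1%:M /\ M *m u = d *: u).
Proof.
move=> Ms Mpsd d0; split.
  move=> [uu [v [vv Mv Mu]]]; split => //.
  apply: psd_eig => //; rewrite Ms in Mu.
  by rewrite Mu -scalemxAr Mv scalerA expr2.
move=> [uu Mu]; split => //; exists u; split => //; by rewrite Ms.
Qed.

Lemma ker_diag (R : realType) m (M U : 'M[R]_m) d (w : 'cV[R]_m) :
  U^T *m U = 1%:M -> M = U *m diag_mx d *m U^T -> M *m w = 0 -> w != 0 ->
  exists j, d 0 j = 0.
Proof.
move=> UU HM Mw wn0.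
have Dz : diag_mx d *m (U^T *m w) = 0.
  have : U^T *m (M *m w) = 0 by rewrite Mw mulmx0.
  by rewrite HM !mulmxA UU mul1mx -!mulmxA.
apply: contrapT => nj.
have z0 : U^T *m w = 0.
  apply/matrixP => i j; rewrite ord1 mxE.
  have := congr1 (fun X : 'cV_m => X i 0) Dz; rewrite mul_diag_mx !mxE.
  move/eqP; rewrite mulf_eq0 => /orP[/eqP h|/eqP //].
  by exfalso; apply: nj; exists i.
move/eqP: wn0; apply.
by rewrite -(mul1mx w) -(mulmx1C UU) -mulmxA z0 mulmx0.
Qed.

Unset Implicit Arguments.

Theorem proposition2 (R : realType) (m n : nat) (A : 'M[R]_(m, n))
    (l : nat) (alpha : R) (i : nat) :
  (0 < l)%N -> (l < m)%N ->
  0 < alpha -> alpha <= sigma (A *m A^T) l / 2 ->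
  (1 <= i)%N -> (i <= l)%N ->
  sigma (A *m A^T - alpha%:M) i = sigma (A *m A^T) i - alpha /\
  (sigma (A *m A^T - alpha%:M) i != sigma (A *m A^T - alpha%:M) l.+1 ->
   forall u : 'cV[R]_m,
     left_singular_vector (A *m A^T - alpha%:M) (sigma (A *m A^T - alpha%:M) i) u
     <-> left_singular_vector (A *m A^T) (sigma (A *m A^T) i) u).
Proof.
move=> l0 lm a0 ha i1 il.
set M := A *m A^T.
have Ms : M^T = M by rewrite /M trmx_mul trmxK.
have Mpsd : forall x : 'cV_m, 0 <= (x^T *m M *m x) 0 0.
  move=> x; have -> : x^T *m M *m x = (A^T *m x)^T *m (A^T *m x).
    by rewrite trmx_mul trmxK /M !mulmxA.
  exact: dot_ge0.
have l1m : (l.-1 < m)%N by lia.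
pose lo := Ordinal l1m.
pose ll := Ordinal lm.
have i1m : (i.-1 < m)%N by lia.
pose ko := Ordinal i1m.
have kol : (ko < l)%N by rewrite /=; lia.
have kll : (ko <= ll)%N by rewrite /=; lia.
have El : l = lo.+1 by rewrite /= prednK.
have Ei : i = ko.+1 by rewrite /= prednK.
set d := singvals M.
have hlo : sigma M l = d 0 lo by rewrite {1}El sigmaE.
have [U [V svdM]] : exists U V, is_svd M U d V.
  apply: contrapT => nex.
  have d0 : d = 0.
    rewrite /d /singvals xgetPN // => x hx; apply: nex.
    exact: (@xgetPex _ 0 [set d | exists U V, is_svd M U d V] (ex_intro _ x hx)).
  rewrite hlo d0 mxE mul0r in ha; lra.
have MD := svd_sym_diag Ms Mpsd svdM.
case: (svdM) => UU _ dge0 dsort _.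
have d2a : 2 * alpha <= d 0 lo by rewrite hlo in ha; lra.
have dk_big : forall k : 'I_m, (k < l)%N -> 2 * alpha <= d 0 k.
  move=> k kl; apply: (le_trans d2a); apply: dsort => /=; lia.
have dk_small : forall k : 'I_m, (l <= k)%N -> d 0 k <= d 0 lo.
  move=> k kl; apply: dsort => /=; lia.
pose c : 'rV[R]_m := \row_k (d 0 k - alpha).
have ND : M - alpha%:M = U *m diag_mx c *m U^T.
  have -> : diag_mx c = diag_mx d - alpha%:M.
    apply/matrixP => p q; rewrite !mxE; case: (p == q); rewrite ?mulr1n ?mulr0n ?subr0 //.
  by rewrite mulmxBr mulmxBl -MD mul_mx_scalar -scalemxAl (mulmx1C UU) scalemx1.
pose ge := fun x y : R => y <= x.
pose a := [tuple `|c 0 k| | k < m].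
pose sd := sort ge (drop l a).
pose ts := take l a ++ sd.
have size_sd : size sd = (m - l)%N by rewrite /sd size_sort size_drop size_tuple.
have size_ts : size ts = m by rewrite /ts size_cat size_sd size_takel ?size_tuple; lia.
have perm_ts : perm_eq ts a.
  by rewrite /ts -[X in perm_eq _ X](cat_take_drop l a) perm_cat2l /sd perm_sort.
have [p Hp] : exists p : 'S_m, ts = [tuple tnth a (p i) | i < m].
  by apply/tuple_permP.
pose e : 'rV[R]_m := \row_k nth 0 ts k.
have He : forall k, e 0 k = `|c 0 (p k)|.
  move=> k; rewrite mxE.
  by rewrite Hp nth_mktuple tnth_mktuple.
have st : size (take l a) = l by rewrite size_takel // size_tuple ltnW.
have ts_head : forall k : 'I_m, (k < l)%N -> e 0 k = d 0 k - alpha.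
  move=> k kl; rewrite mxE /ts nth_cat st kl nth_take // (nth_mktuple _ 0 k) mxE.
  apply: ger0_norm; have := dk_big k kl; lra.
have tail_nth : forall k : 'I_m, (l <= k)%N -> e 0 k = nth 0 sd (k - l).
  by move=> k kl; rewrite mxE /ts nth_cat st ltnNge kl.
have tail_bound : forall x, x \in sd -> 0 <= x <= d 0 lo - alpha.
  move=> x; rewrite mem_sort => /(nthP 0) [j hj <-]; rewrite nth_drop.
  have hj' : (l + j < m)%N by rewrite size_drop size_tuple in hj; lia.
  have -> : (l + j)%N = nat_of_ord (Ordinal hj') by [].
  rewrite (nth_mktuple _ 0 (Ordinal hj')) mxE normr_ge0 /=.
  have h1 := dk_small (Ordinal hj') (leq_addr _ _); have h2 := dge0 (Ordinal hj').
  rewrite ler_norml; apply/andP; split; lra.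
have sd_sorted : sorted ge sd.
  by apply: sort_sorted => x y; rewrite /ge orbC le_total.
have ts_sorted : forall k k' : 'I_m, (k <= k')%N -> e 0 k' <= e 0 k.
  move=> k k' kk'; have ok := ltn_ord k; have ok' := ltn_ord k'.
  case: (ltnP k' l) => hk'.
    have hk : (k < l)%N by lia.
    rewrite (ts_head k hk) (ts_head k' hk').
    have := dsort _ _ kk'; lra.
  case: (ltnP k l) => hk.
    rewrite (ts_head k hk) (tail_nth k' hk').
    have hin : nth 0 sd (k' - l) \in sd by apply: mem_nth; rewrite size_sd; lia.
    have /andP[_ h] := tail_bound _ hin.
    have hklo : (k <= lo)%N by rewrite /=; lia.
    have := dsort k lo hklo; lra.
  rewrite (tail_nth k hk) (tail_nth k' hk').
  apply: (sorted_leq_nth (leT := ge)).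
  - by move=> x y z; rewrite /ge => h1 h2; apply: le_trans h2 h1.
  - by move=> x; rewrite /ge.
  - exact: sd_sorted.
  - by rewrite inE size_sd; lia.
  - by rewrite inE size_sd; lia.
  - lia.
have svdN : is_svd (M - alpha%:M) (col_perm p U) e
                    (col_perm p (U *m diag_mx (sgv c))).
  by rewrite ND; apply: svd_of_diag.
have eN : singvals (M - alpha%:M) = e.
  have [U2 [V2 h2]] : exists U V, is_svd (M - alpha%:M) U (singvals (M - alpha%:M)) V.
    exact: (@xgetPex _ 0 [set d | exists U V, is_svd (M - alpha%:M) U d V]
             (ex_intro _ e (ex_intro _ _ (ex_intro _ _ svdN)))).
  exact: svd_unique h2 svdN.
have sN : sigma (M - alpha%:M) i = d 0 ko - alpha by rewrite Ei sigmaE eN ts_head.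
have sM : sigma M i = d 0 ko by rewrite Ei sigmaE.
rewrite sN sM; split => //.
have sl : sigma (M - alpha%:M) l.+1 = e 0 ll by rewrite (sigmaE _ ll) eN.
rewrite sl => hne u.
have Ns : (M - alpha%:M)^T = M - alpha%:M by rewrite raddfB /= Ms tr_scalar_mx.
have NM : forall x : 'cV_m, M *m x = (M - alpha%:M) *m x + alpha *: x.
  by move=> x; rewrite mulmxBl mul_scalar_mx subrK.
rewrite (@lsv_psd R m M (d 0 ko) u Ms Mpsd (dge0 ko)).
split.
- move=> [uu [v [vv Nv Nu]]]; split => //.
  rewrite Ns in Nu.
  set s := d 0 ko - alpha in Nv Nu hne *.
  set N := M - alpha%:M in Nv Nu NM *.
  have NNu : N *m (N *m u) = s ^+ 2 *: u by rewrite Nu -scalemxAr Nv scalerA expr2.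
  pose w := N *m u - s *: u.
  have Nw : N *m w = - s *: w.
    rewrite /w mulmxBr NNu -scalemxAr scalerBr scalerA mulNr !scaleNr opprK addrC expr2.
    done.
  have Mw : M *m w = (2 * alpha - d 0 ko) *: w.
    by rewrite NM Nw -scalerDl; congr (_ *: _); rewrite /s; lra.
  have w0 : w = 0.
    apply: contrapT => wn0; have wn0' : w != 0 by apply/eqP.
    have pos : 0 < (w^T *m w) 0 0.
      rewrite lt_def dot_ge0 andbT; apply/eqP => h; apply: wn0; exact: dot_eq0 h.
    have Hq := Mpsd w; rewrite -mulmxA Mw -scalemxAr mxE in Hq.
    have dko := dk_big ko kol.
    rewrite pmulr_lge0 // in Hq.
    have deq : d 0 ko = 2 * alpha by lra.
    have Mw0 : M *m w = 0 by rewrite Mw deq subrr scale0r.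
    have [j dj] := ker_diag UU MD Mw0 wn0'.
    have oj := ltn_ord j.
    have hj : (l <= j)%N.
      by rewrite leqNgt; apply/negP => hj; have := dk_big j hj; lra.
    have hin : alpha \in sd.
      rewrite mem_sort; apply/(nthP 0); exists (j - l)%N.
        by rewrite size_drop size_tuple; exact: ltn_sub2r lm oj.
      rewrite nth_drop (subnKC hj) (nth_mktuple _ 0 j) mxE dj sub0r normrN.
      exact: gtr0_norm a0.
    have ell : alpha <= e 0 ll.
      rewrite (tail_nth ll (leqnn l)) subnn.
      move/(nthP 0): hin => [q hq <-]; rewrite size_sd in hq.
      apply: (sorted_leq_nth (leT := ge)).
      - by move=> x y z; rewrite /ge => h1 h2; apply: le_trans h2 h1.
      - by move=> x; rewrite /ge.
      - exact: sd_sorted.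
      - by rewrite inE size_sd subn_gt0.
      - by rewrite inE size_sd.
      - exact: leq0n.
    have := ts_sorted ko ll kll; rewrite (ts_head ko kol) => h.
    move/eqP: hne; apply; rewrite /s; lra.
  have Nu' : N *m u = s *: u by apply/eqP; rewrite -subr_eq0; apply/eqP; exact: w0.
  by rewrite NM Nu' -scalerDl /s subrK.
- move=> [uu Mu]; split => //; exists u; split => //; rewrite ?Ns mulmxBl mul_scalar_mx Mu -scalerBl //.
Qed.
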